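(* For any dynamic network game $\mathcal{G}$ considered as a safety game: if Destructor wins the safety game $\mathcal{G}$, then he also has a strict strategy that wins the safety game $\mathcal{G}$.
   Context: Dynamic network games $(G,R)$ are played on networks $G=(V,E,A,S,(P_a)_{a\in\Sigma})$ ($V$ nodes, $E$ undirected edges, $A\subseteq V$ active nodes, $S\subseteq A$ strong nodes, labels given by a partition $(P_a)$ of $V$; weak nodes are those in $A\setminus S$). Destructor and Constructor alternate (Destructor first, either may skip); Destructor deletes one weak node per move, Constructor applies one of her rules from $R$ (relabeling, movement, or creation rules). A network is connected if the subgraph induced by the active nodes is connected. In the safety game the initial network is connected and Constructor wins a play iff all networks in it are connected; she wins the game iff she has a strategy winning all plays consistent with it, otherwise Destructor wins. A Destructor strategy is strict if, whenever it is his turn and the current network contains a weak node, he deletes a node (never skips). *)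

(* Defs.v *)
From mathcomp Require Import all_boot.
Set Implicit Arguments.
Unset Strict Implicit.
Unset Printing Implicit Defensive.

(* Networks  G = (V, E, A, S, (P_a)_{a in Sigma}).                      *)
(* Nodes are natural numbers; V is a finite list of nodes; E is an      *)
(* (undirected, i.e. symmetric) edge relation; A the active nodes, S    *)
(* the strong nodes; the partition (P_a) is given by a labelling        *)
(* function  label : nat -> Sigma  (P_a = {v in V | label v = a}).      *)
Record network (Sigma : Type) := Network {
  nodes  : seq nat;
  edge   : rel nat;
  active : pred nat;
  strong : pred nat;
  label  : nat -> Sigma
}.

Definition wf_network (Sigma : Type) (N : network Sigma) : Prop :=
  [/\ uniq (nodes N),
      (forall x y, edge N x y -> (x \in nodes N) && (y \in nodes N)),
      (forall x y, edge N x y = edge N y x),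
      (forall x, active N x -> x \in nodes N) &
      (forall x, strong N x -> active N x)].

Definition is_active (Sigma : Type) (N : network Sigma) (x : nat) : bool :=
  (x \in nodes N) && active N x.

Definition weak (Sigma : Type) (N : network Sigma) (x : nat) : bool :=
  is_active N x && ~~ strong N x.

Definition connected (Sigma : Type) (N : network Sigma) : Prop :=
  forall x y, is_active N x -> is_active N y ->
    exists s : seq nat,
      path (fun a b => edge N a b && is_active N b) x s && (last x s == y).

Definition del (Sigma : Type) (N : network Sigma) (v : nat) : network Sigma :=
  {| nodes  := [seq x <- nodes N | x != v];
     edge   := fun a b => [&& edge N a b, a != v & b != v];
     active := fun a => active N a && (a != v);
     strong := fun a => strong N a && (a != v);
     label  := label N |}.

(* Constructor's rules.  A rule set R is a set of rules of some type     *)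
(* Rule, and  apply r N N'  means that applying rule r to network N can  *)
(* yield N'.  (Relabeling, movement and creation rules are all instances *)

Definition dmove (Sigma : Type) (N N' : network Sigma) : Prop :=
  N' = N \/ exists v, weak N v /\ N' = del N v.

Definition cmove (Sigma Rule : Type) (apply : Rule -> network Sigma -> network Sigma -> Prop)
  (R : Rule -> Prop) (N N' : network Sigma) : Prop :=
  N' = N \/ exists r, R r /\ apply r N N'.

(* Plays are infinite sequences p : nat -> network; p (2k) is the network
   when Destructor is to move, p (2k+1) when Constructor is to move.
   The history up to position n is [:: p 0; ...; p n]. *)
Definition hist (Sigma : Type) (p : nat -> network Sigma) (n : nat) : seq (network Sigma) :=
  map p (iota 0 n.+1).

Definition dstrategy (Sigma : Type) := seq (network Sigma) -> option nat.  (* None = skip, Some v = delete v *)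
Definition cstrategy (Sigma : Type) := seq (network Sigma) -> network Sigma.

Definition dresult (Sigma : Type) (N : network Sigma) (o : option nat) : network Sigma :=
  if o is Some v then del N v else N.

Definition dlegal (Sigma : Type) (sigma : dstrategy Sigma) : Prop :=
  forall h N v, sigma (rcons h N) = Some v -> weak N v.

Definition dstrict (Sigma : Type) (sigma : dstrategy Sigma) : Prop :=
  forall h N, (exists v, weak N v) -> sigma (rcons h N) <> None.

Definition clegal (Sigma Rule : Type) (apply : Rule -> network Sigma -> network Sigma -> Prop)
  (R : Rule -> Prop) (tau : cstrategy Sigma) : Prop :=
  forall h N, cmove apply R N (tau (rcons h N)).

Definition dplay (Sigma Rule : Type) (apply : Rule -> network Sigma -> network Sigma -> Prop)
  (R : Rule -> Prop) (N0 : network Sigma) (sigma : dstrategy Sigma)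
  (p : nat -> network Sigma) : Prop :=
  p 0 = N0 /\
  forall k, p k.*2.+1 = dresult (p k.*2) (sigma (hist p k.*2)) /\
            cmove apply R (p k.*2.+1) (p k.*2.+2).

Definition cplay (Sigma Rule : Type) (apply : Rule -> network Sigma -> network Sigma -> Prop)
  (R : Rule -> Prop) (N0 : network Sigma) (tau : cstrategy Sigma)
  (p : nat -> network Sigma) : Prop :=
  p 0 = N0 /\
  forall k, dmove (p k.*2) (p k.*2.+1) /\ p k.*2.+2 = tau (hist p k.*2.+1).

Definition constructor_wins_safety (Sigma Rule : Type)
  (apply : Rule -> network Sigma -> network Sigma -> Prop)
  (R : Rule -> Prop) (N0 : network Sigma) : Prop :=
  exists tau : cstrategy Sigma, clegal apply R tau /\
    forall p, cplay apply R N0 tau p -> forall i, connected (p i).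

Definition destructor_wins_safety (Sigma Rule : Type)
  (apply : Rule -> network Sigma -> network Sigma -> Prop)
  (R : Rule -> Prop) (N0 : network Sigma) : Prop :=
  ~ constructor_wins_safety apply R N0.

Definition dstrategy_wins_safety (Sigma Rule : Type)
  (apply : Rule -> network Sigma -> network Sigma -> Prop)
  (R : Rule -> Prop) (N0 : network Sigma) (sigma : dstrategy Sigma) : Prop :=
  dlegal sigma /\
  forall p, dplay apply R N0 sigma p -> exists i, ~ connected (p i).

(* Main.v *)
From Stdlib Require Import Classical ClassicalEpsilon ProofIrrelevance.
Require Import Defs.
From mathcomp Require Import all_boot.
From mathcomp Require Import zify.

Set Implicit Arguments.
Unset Strict Implicit.
Unset Printing Implicit Defensive.

Definition dec (P : Prop) : {P} + {~ P} := excluded_middle_informative P.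

Definition sleg (Sigma : Type) (N : network Sigma) (o : option nat) : Prop :=
  match o with Some v => weak N v | None => ~ exists v, weak N v end.

Inductive AttT (Sigma Rule : Type)
  (apply : Rule -> network Sigma -> network Sigma -> Prop)
  (R : Rule -> Prop) : network Sigma -> Type :=
| AT0 N : ~ connected N -> AttT apply R N
| AT1 N (o : option nat) : sleg N o ->
    (forall c : connected (dresult N o), forall N'',
        cmove apply R (dresult N o) N'' -> AttT apply R N'') -> AttT apply R N.

Definition def_move (Sigma : Type) (N : network Sigma) : option nat :=
  match dec (exists v, weak N v) with
  | left H => Some (proj1_sig (constructive_indefinite_description _ H))
  | right _ => None
  end.

Lemma def_move_leg (Sigma : Type) (N : network Sigma) : sleg N (def_move N).
Proof.
rewrite /def_move; case: dec => [H|H] //=.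
exact: (proj2_sig (constructive_indefinite_description _ H)).
Qed.

Definition stT (Sigma Rule : Type)
  (apply : Rule -> network Sigma -> network Sigma -> Prop) (R : Rule -> Prop) :=
  option {N : network Sigma & AttT apply R N}.

Definition step (Sigma Rule : Type)
  (apply : Rule -> network Sigma -> network Sigma -> Prop) (R : Rule -> Prop)
  (t : stT apply R) (a b : network Sigma) : stT apply R :=
  match t with
  | Some (existT N t') =>
    match t' with
    | AT0 _ _ => None
    | AT1 N o _ k =>
      match dec (a = dresult N o /\ connected (dresult N o) /\
                 cmove apply R (dresult N o) b) with
      | left H => Some (existT _ b (k (proj1 (proj2 H)) b (proj2 (proj2 H))))
      | right _ => None
      end
    end
  | None => None
  end.

Fixpoint st (Sigma Rule : Type)
  (apply : Rule -> network Sigma -> network Sigma -> Prop) (R : Rule -> Prop)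
  (N0 : network Sigma) (d : AttT apply R N0) (h : seq (network Sigma)) (j : nat)
  : stT apply R :=
  match j with
  | 0 => Some (existT _ N0 d)
  | j'.+1 => step (st d h j') (nth N0 h j'.*2.+1) (nth N0 h j'.*2.+2)
  end.

Definition tmove (Sigma Rule : Type)
  (apply : Rule -> network Sigma -> network Sigma -> Prop) (R : Rule -> Prop)
  (t : stT apply R) : option nat :=
  match t with
  | Some (existT N t') => match t' with AT0 _ _ => None | AT1 _ o _ _ => o end
  | None => None
  end.

Definition sigmaS (Sigma Rule : Type)
  (apply : Rule -> network Sigma -> network Sigma -> Prop) (R : Rule -> Prop)
  (N0 : network Sigma) (d : AttT apply R N0) : dstrategy Sigma :=
  fun h =>
    let o := tmove (st d h (size h).-1./2) in
    if dec (sleg (last N0 h) o) then o else def_move (last N0 h).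

Lemma nth_hist (Sigma : Type) (p : nat -> network Sigma) (N0 : network Sigma) n i :
  i <= n -> nth N0 (hist p n) i = p i.
Proof.
move=> Hi; rewrite /hist (nth_map 0) ?size_iota ?nth_iota //; lia.
Qed.

Lemma size_hist (Sigma : Type) (p : nat -> network Sigma) n : size (hist p n) = n.+1.
Proof. by rewrite /hist size_map size_iota. Qed.

Lemma last_hist (Sigma : Type) (p : nat -> network Sigma) (N0 : network Sigma) n :
  last N0 (hist p n) = p n.
Proof.
rewrite (last_nth N0) size_hist /=.
by rewrite nth_hist.
Qed.

Lemma sigma_win (Sigma Rule : Type)
  (apply : Rule -> network Sigma -> network Sigma -> Prop)
  (R : Rule -> Prop) (N0 : network Sigma) (d : AttT apply R N0) :
  dstrict (sigmaS d) /\ dstrategy_wins_safety apply R N0 (sigmaS d).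
Proof.
split; [|split].
- move=> h N [v Hv]; rewrite /sigmaS last_rcons.
  case: dec => [Hl|Hl].
  + by move: Hl; case: tmove => // Hl _; apply: Hl; exists v.
  + by move: (def_move_leg N); case: def_move => // Hl2 _; apply: Hl2; exists v.
- move=> h N v; rewrite /sigmaS last_rcons.
  case: dec => [Hl|Hl] /= E; first by move: Hl; rewrite E.
  by move: (def_move_leg N); rewrite E.
- move=> p [p0 Hp].
  apply: NNPP => Hn.
  have Hc : forall i, connected (p i).
    by move=> i; apply: NNPP => Hi; apply: Hn; exists i.
  pose stp := fix stp j := match j with
    | 0 => Some (existT (fun N => AttT apply R N) N0 d)
    | j'.+1 => step (stp j') (p j'.*2.+1) (p j'.*2.+2) end.
  have Hst : forall k j, j <= k -> st d (hist p k.*2) j = stp j.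
    move=> k; elim=> [|j IH] Hj; first by [].
    have -> : st d (hist p k.*2) j.+1 = step (st d (hist p k.*2) j)
      (nth N0 (hist p k.*2) j.*2.+1) (nth N0 (hist p k.*2) j.*2.+2) by [].
    rewrite IH; last by lia.
    by rewrite !nth_hist //; lia.
  have key : forall N (t : AttT apply R N) j,
      stp j = Some (existT _ N t) -> N = p j.*2 -> False.
    move=> N t; elim: t => [N1 nc|N1 o Hs k IH] j Ej EN.
    + by apply: (nc); rewrite EN; apply: Hc.
    + have Hsig : sigmaS d (hist p j.*2) = o.
        rewrite /sigmaS size_hist last_hist /=.
        have -> : j.*2./2 = j by rewrite doubleK.
        rewrite Hst // Ej /=.
        by case: dec => // []; rewrite -EN.
      have [E1 Hm] := Hp j.
      rewrite Hsig -EN in E1.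
      have Hc1 : connected (dresult N1 o) by rewrite -E1.
      apply: (IH Hc1 (p j.*2.+2) (eq_ind _ (fun x => cmove apply R x _) Hm _ E1) j.+1).
      * rewrite /= Ej /=.
        case: dec => [H|H].
        -- by rewrite (proof_irrelevance _ (proj1 (proj2 H)) Hc1)
              (proof_irrelevance _ (proj2 (proj2 H)) (eq_ind _ (fun x => cmove apply R x _) Hm _ E1)).
        -- by exfalso; apply: H; split; [|split] => //; rewrite -E1.
      * by rewrite doubleS.
  by apply: (key N0 d 0).
Qed.

Definition tauS (Sigma Rule : Type)
  (apply : Rule -> network Sigma -> network Sigma -> Prop) (R : Rule -> Prop)
  (N0 : network Sigma) : cstrategy Sigma :=
  fun h =>
    let N := last N0 h in
    match dec (exists N'', cmove apply R N N'' /\ ~ inhabited (AttT apply R N'')) with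
    | left H => proj1_sig (constructive_indefinite_description _ H)
    | right _ => N
    end.

Lemma tau_spec (Sigma Rule : Type)
  (apply : Rule -> network Sigma -> network Sigma -> Prop) (R : Rule -> Prop)
  (N0 : network Sigma) h :
  cmove apply R (last N0 h) (tauS apply R N0 h) /\
  ((exists N'', cmove apply R (last N0 h) N'' /\ ~ inhabited (AttT apply R N'')) ->
   ~ inhabited (AttT apply R (tauS apply R N0 h))).
Proof.
rewrite /tauS; case: dec => [H|H].
- have := proj2_sig (constructive_indefinite_description _ H) => -[H1 H2].
  by split => // _.
- by split; [left | move=> /H].
Qed.

Lemma inv_step (Sigma Rule : Type)
  (apply : Rule -> network Sigma -> network Sigma -> Prop) (R : Rule -> Prop)
  (N : network Sigma) (o : option nat) :
  ~ inhabited (AttT apply R N) -> sleg N o ->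
  connected (dresult N o) /\
  exists N'', cmove apply R (dresult N o) N'' /\ ~ inhabited (AttT apply R N'').
Proof.
move=> HI Hs.
have Hc : connected (dresult N o).
  apply: NNPP => nc; apply: HI; constructor.
  by apply: (AT1 Hs) => c; exfalso; apply: nc.
split => //; apply: NNPP => Hn; apply: HI; constructor.
apply: (AT1 Hs) => c N'' Hm.
have : inhabited (AttT apply R N'').
  by apply: NNPP => Hi; apply: Hn; exists N''.
move=> Hinh.
have Hex : exists _ : AttT apply R N'', True by case: Hinh => t; exists t.
exact: (proj1_sig (constructive_indefinite_description _ Hex)).
Qed.

Theorem mainTheorem2 (Sigma Rule : Type)
  (apply : Rule -> network Sigma -> network Sigma -> Prop)
  (R : Rule -> Prop) (N0 : network Sigma) :
  wf_network N0 -> connected N0 ->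
  destructor_wins_safety apply R N0 ->
  exists sigma : dstrategy Sigma,
    dstrict sigma /\ dstrategy_wins_safety apply R N0 sigma.
Proof.
move=> _ _ Hd.
case: (classic (inhabited (AttT apply R N0))) => [[d]|HI].
  by exists (sigmaS d); apply: sigma_win.
exfalso; apply: Hd.
exists (tauS apply R N0); split.
  by move=> h N; have [] := tau_spec apply R N0 (rcons h N); rewrite last_rcons.
move=> p [p0 Hp].
have Hinv : forall k, ~ inhabited (AttT apply R (p k.*2)).
  elim=> [|k IH]; first by rewrite p0.
  have [Hdm E] := Hp k.
  have [_ Ht] := tau_spec apply R N0 (hist p k.*2.+1).
  rewrite last_hist in Ht.
  rewrite doubleS E; apply: Ht.
  case: Hdm => [->|[v [Hw ->]]].
    by exists (p k.*2); split => //; left.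
  by have [] := inv_step (o := Some v) IH Hw.
have Hcon : forall N, ~ inhabited (AttT apply R N) -> connected N.
  by move=> N HN; apply: NNPP => nc; apply: HN; constructor; exact: AT0.
move=> i; rewrite -[i](odd_double_half i).
case: (odd i) => /=; last by rewrite add0n; apply: Hcon.
rewrite add1n; have [Hdm _] := Hp i./2.
case: Hdm => [->|[v [Hw ->]]]; first exact: Hcon.
by have [] := inv_step (o := Some v) (Hinv i./2) Hw.
Qed.
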